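(* There exists a strictly increasing sequence $(n_k)_{k\ge0}$ of positive integers with $n_{k+1}/n_k\to1$ as $k\to\infty$ which is a rigidity sequence; i.e. there is a continuous Borel probability measure $\sigma$ on $\mathbb{T}$ with $\hat\sigma(n_k)\to1$.
   Context: $\hat\sigma(n)=\int_{\mathbb{T}}\lambda^n\,d\sigma(\lambda)$; continuous means atomless. A strictly increasing sequence $(n_k)$ of positive integers is a rigidity sequence if there exist a probability space and a measure-preserving transformation $\varphi$ that is weakly mixing and rigid with respect to $(n_k)$ (i.e. $\mu(\varphi^{-n_k}(A)\triangle A)\to0$ for all measurable $A$); equivalently, if there is a continuous probability measure $\sigma$ on $\mathbb{T}$ with $\hat\sigma(n_k)\to1$. *)

(* Defs.v *)
(* The circle T is parametrised by [0,1) via t |-> exp(2 i pi t). *)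
From Stdlib Require Import Reals Rtopology.
Open Scope R_scope.

Inductive borel : (R -> Prop) -> Prop :=
| borel_open (A : R -> Prop) : open_set A -> borel A
| borel_compl (A : R -> Prop) : borel A -> borel (fun x => ~ A x)
| borel_union (A : nat -> R -> Prop) :
    (forall n, borel (A n)) -> borel (fun x => exists n, A n x)
| borel_ext (A B : R -> Prop) : borel A -> (forall x, A x <-> B x) -> borel B.

(* A Borel probability measure on T, seen as a Borel probability measure on R
   carried by [0,1) (values on non-Borel sets are irrelevant). *)
Record borel_prob_T (mu : (R -> Prop) -> R) : Prop := {
  bp_ext : forall A B, (forall x, A x <-> B x) -> mu A = mu B;
  bp_nonneg : forall A, borel A -> 0 <= mu A;
  bp_sigma_add : forall A : nat -> R -> Prop,
      (forall n, borel (A n)) ->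
      (forall i j x, i <> j -> A i x -> A j x -> False) ->
      infinite_sum (fun n => mu (A n)) (mu (fun x => exists n, A n x));
  bp_total : mu (fun x => 0 <= x < 1) = 1;
  bp_outside : mu (fun x => ~ (0 <= x < 1)) = 0
}.

(* continuous = atomless *)
Definition atomless (mu : (R -> Prop) -> R) : Prop :=
  forall x : R, mu (fun y => y = x) = 0.

(* Approximating sums for the integral of a continuous function f on [0,1)
   against mu, using the partition of [0,1) into m+1 equal half-open intervals.
   For f continuous on [0,1] these converge to the integral of f d mu. *)
Definition approx_sum (mu : (R -> Prop) -> R) (f : R -> R) (m : nat) : R :=
  sum_f_R0 (fun j => f (INR j / INR (S m)) *
                     mu (fun x => INR j / INR (S m) <= x < INR (S j) / INR (S m))) m.

Definition integral_cont (mu : (R -> Prop) -> R) (f : R -> R) (c : R) : Prop :=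
  Un_cv (approx_sum mu f) c.

(* Fourier coefficient  hat sigma(n) = int_T lambda^n d sigma(lambda)
   = int_[0,1) exp(2 i pi n t) d mu(t)  has real part re and imaginary part im. *)
Definition fourier_coeff (mu : (R -> Prop) -> R) (n : nat) (re im : R) : Prop :=
  integral_cont mu (fun t => cos (2 * PI * INR n * t)) re /\
  integral_cont mu (fun t => sin (2 * PI * INR n * t)) im.

(* Main.v *)
Require Import Defs.
From Stdlib Require Import Reals Rtopology Lra Lia Psatz Classical.
Open Scope R_scope.

Lemma abs_sin_le x : Rabs (sin x) <= Rabs x.
Proof.
  destruct (Rtotal_order x 0) as [H|[H|H]].
  - rewrite <- (Ropp_involutive x). rewrite sin_neg, Rabs_Ropp, Rabs_Ropp.
    set (y := - x). assert (0 < y) by (unfold y; lra).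
    pose proof (sin_lt_x y H0). pose proof (SIN_bound y).
    destruct (Rle_lt_dec 1 y).
    + rewrite (Rabs_pos_eq y) by lra. unfold Rabs; destruct Rcase_abs; lra.
    + assert (0 <= sin y) by (apply sin_ge_0; pose proof PI2_3_2; lra).
      rewrite !Rabs_pos_eq; lra.
  - subst. rewrite sin_0, Rabs_R0. lra.
  - pose proof (sin_lt_x x H). pose proof (SIN_bound x).
    destruct (Rle_lt_dec 1 x).
    + rewrite (Rabs_pos_eq x) by lra. unfold Rabs; destruct Rcase_abs; lra.
    + assert (0 <= sin x) by (apply sin_ge_0; pose proof PI2_3_2; lra).
      rewrite !Rabs_pos_eq; lra.
Qed.

Lemma cos_lip a b : Rabs (cos a - cos b) <= Rabs (a - b).
Proof.
  rewrite form2. rewrite !Rabs_mult.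
  pose proof (abs_sin_le ((a - b) / 2)).
  pose proof (SIN_bound ((a + b) / 2)).
  assert (Rabs (sin ((a + b) / 2)) <= 1) by (unfold Rabs; destruct Rcase_abs; lra).
  assert (Rabs ((a - b) / 2) = Rabs (a - b) / 2).
  { unfold Rdiv. rewrite Rabs_mult. rewrite (Rabs_pos_eq (/2)) by lra. reflexivity. }
  replace (Rabs (-2)) with 2 by (rewrite Rabs_left; lra).
  pose proof (Rabs_pos (sin ((a - b) / 2))).
  pose proof (Rabs_pos (sin ((a + b) / 2))).
  nra.
Qed.

Lemma sin_lip a b : Rabs (sin a - sin b) <= Rabs (a - b).
Proof.
  rewrite form4. rewrite !Rabs_mult.
  pose proof (abs_sin_le ((a - b) / 2)).
  pose proof (COS_bound ((a + b) / 2)).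
  assert (Rabs (cos ((a + b) / 2)) <= 1) by (unfold Rabs; destruct Rcase_abs; lra).
  assert (Rabs ((a - b) / 2) = Rabs (a - b) / 2).
  { unfold Rdiv. rewrite Rabs_mult. rewrite (Rabs_pos_eq (/2)) by lra. reflexivity. }
  rewrite (Rabs_pos_eq 2) by lra.
  pose proof (Rabs_pos (sin ((a - b) / 2))).
  pose proof (Rabs_pos (cos ((a + b) / 2))).
  nra.
Qed.

Definition q (j:nat) : R := / INR (j+2).
Definition T (j:nat) (v:R) : R :=
  if Rlt_dec v (1 - q j) then v / (1 - q j) else (v - (1 - q j)) / q j.
Fixpoint u (j:nat) (x:R) : R := match j with 0 => x | S j => T j (u j x) end.
Definition e (j:nat) (x:R) : R := if Rle_dec (1 - q j) (u j x) then 1 else 0.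
Definition M (j:nat) : R := 2 ^ ((j+1)*(j+1)).
Definition gs (x:R) (J:nat) : R := sum_f_R0 (fun j => e j x / M j) J.

Lemma q_bounds j : 0 < q j <= /2.
Proof.
  unfold q. rewrite plus_INR. simpl. pose proof (pos_INR j).
  split. apply Rinv_0_lt_compat; lra.
  apply Rinv_le_contravar; lra.
Qed.

Lemma u_range j x : 0 <= x < 1 -> 0 <= u j x < 1.
Proof.
  intro Hx. induction j as [|j IH]; simpl; auto.
  unfold T. pose proof (q_bounds j).
  destruct Rlt_dec as [H1|H1].
  - split. apply Rmult_le_pos; [lra|]. left; apply Rinv_0_lt_compat; lra.
    apply (Rmult_lt_reg_r (1 - q j)); [lra|]. unfold Rdiv.
    rewrite Rmult_assoc, Rinv_l by lra. lra.
  - split. apply Rmult_le_pos; [lra|]. left; apply Rinv_0_lt_compat; lra.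
    apply (Rmult_lt_reg_r (q j)); [lra|]. unfold Rdiv.
    rewrite Rmult_assoc, Rinv_l by lra. lra.
Qed.

Lemma e_01 j x : e j x = 0 \/ e j x = 1.
Proof. unfold e; destruct Rle_dec; auto. Qed.

Lemma M_pos j : 0 < M j.
Proof. unfold M. apply pow_lt; lra. Qed.

Lemma M_S j : M (S j) = M j * 2 ^ (2*j+3).
Proof.
  unfold M. rewrite <- pow_add. f_equal. lia.
Qed.

Lemma M_S_ge j : 8 * M j <= M (S j).
Proof.
  rewrite M_S. pose proof (M_pos j).
  assert (8 <= 2 ^ (2*j+3)).
  { replace (2*j+3)%nat with (3 + 2*j)%nat by lia. rewrite pow_add.
    replace (2^3) with 8 by (simpl; lra).
    assert (1 <= 2 ^ (2*j)) by (apply pow_R1_Rle; lra). nra. }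
  nra.
Qed.

Fixpoint ts (J k : nat) : R := match k with 0 => 0 | S k => / M (S J) + ts (S J) k end.

Lemma ts_S J k : ts J (S k) = ts J k + / M (J + S k).
Proof.
  revert J; induction k as [|k IH]; intro J; simpl.
  - replace (J+1)%nat with (S J) by lia. lra.
  - simpl in IH. rewrite IH. replace (S J + S k)%nat with (J + S (S k))%nat by lia. lra.
Qed.

Lemma ts_bound J k : 0 <= ts J k <= (8/7) / M (S J).
Proof.
  revert J; induction k as [|k IH]; intro J; simpl.
  - pose proof (M_pos (S J)). split; [lra|]. unfold Rdiv.
    apply Rmult_le_pos; [lra|]. left; apply Rinv_0_lt_compat; lra.
  - destruct (IH (S J)) as [H1 H2]. pose proof (M_pos (S J)). pose proof (M_S_ge (S J)).
    pose proof (M_pos (S (S J))).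
    assert (0 < / M (S J)) by (apply Rinv_0_lt_compat; lra).
    assert (/ M (S (S J)) <= /8 * / M (S J)).
    { rewrite <- Rinv_mult. apply Rinv_le_contravar; lra. }
    unfold Rdiv in *. split; nra.
Qed.

Lemma gs_tail x J k : 0 <= gs x (J + k) - gs x J <= ts J k.
Proof.
  induction k as [|k IH].
  - rewrite Nat.add_0_r. simpl. lra.
  - rewrite ts_S. unfold gs in *. rewrite Nat.add_succ_r. simpl sum_f_R0.
    replace (J + S k)%nat with (S (J + k)) by lia.
    pose proof (M_pos (S (J+k))). assert (0 < / M (S (J+k))) by (apply Rinv_0_lt_compat; lra).
    destruct (e_01 (S (J + k)) x) as [He|He]; rewrite He; unfold Rdiv.
    + rewrite Rmult_0_l. split; lra.
    + rewrite Rmult_1_l. split; lra.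
Qed.

Lemma gs_growing x : Un_growing (gs x).
Proof.
  intro n. pose proof (gs_tail x n 1). replace (n+1)%nat with (S n) in H by lia. lra.
Qed.

Lemma gs0_bound x : 0 <= gs x 0 <= /2.
Proof.
  unfold gs; simpl. unfold M; simpl. destruct (e_01 0 x) as [H|H]; rewrite H; split; lra.
Qed.

Lemma gs_ub x : has_ub (gs x).
Proof.
  exists (/2 + 8/7/M 1). intros y [n ->].
  pose proof (gs_tail x 0 n). pose proof (ts_bound 0 n). pose proof (gs0_bound x).
  simpl in *. lra.
Qed.

Definition g (x:R) : R := proj1_sig (growing_cv (gs x) (gs_growing x) (gs_ub x)).

Lemma g_cv x : Un_cv (gs x) (g x).
Proof. unfold g. destruct growing_cv; auto. Qed.

Lemma g_ge x J : gs x J <= g x.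
Proof. apply growing_ineq. apply gs_growing. apply g_cv. Qed.

Lemma g_le x J : g x <= gs x J + 8/7 / M (S J).
Proof.
  destruct (Rle_lt_dec (g x) (gs x J + 8/7 / M (S J))) as [H|H]; auto.
  exfalso. destruct (g_cv x (g x - (gs x J + 8/7 / M (S J)))) as [N HN]; [lra|].
  specialize (HN (J + N)%nat ltac:(lia)). unfold R_dist in HN.
  pose proof (gs_tail x J N). pose proof (ts_bound J N).
  pose proof (g_ge x (J+N)).
  rewrite Rabs_left1 in HN by lra. lra.
Qed.

Lemma M0 : M 0 = 2.
Proof. unfold M; simpl; lra. Qed.
Lemma M1 : M 1 = 16.
Proof. unfold M; simpl; lra. Qed.

Lemma g_range x : 0 <= g x < 1.
Proof.
  pose proof (g_ge x 0). pose proof (g_le x 0). pose proof (gs0_bound x).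
  rewrite M1 in H0. lra.
Qed.

Lemma one_minus_q j : 1 - q j = INR (j+1) / INR (j+2).
Proof.
  unfold q. rewrite !plus_INR. simpl. pose proof (pos_INR j). field. lra.
Qed.

Lemma u_diff x y : 0 <= x -> x < y -> y < 1 -> forall j,
  (forall i, (i < j)%nat -> e i x = e i y) ->
  u j x < u j y /\ (y - x) * INR (j+1) <= u j y - u j x.
Proof.
  intros H0 Hxy Hy1 j. induction j as [|j IH]; intro Hag.
  - simpl. split; lra.
  - destruct IH as [IH1 IH2]. { intros i Hi. apply Hag. lia. }
    assert (Hj : e j x = e j y) by (apply Hag; lia).
    pose proof (q_bounds j). pose proof (one_minus_q j).
    assert (Hp : 0 < INR (j+1)) by (rewrite plus_INR; simpl; pose proof (pos_INR j); lra).
    assert (Hp2 : INR (j+2) = INR (j+1) + 1) by (rewrite !plus_INR; simpl; lra).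
    replace (S j + 1)%nat with (j + 2)%nat by lia.
    cbn [u]. unfold T. unfold e in Hj.
    destruct (Rle_dec (1 - q j) (u j x)) as [Hx|Hx];
    destruct (Rle_dec (1 - q j) (u j y)) as [Hy|Hy]; try (exfalso; lra).
    + destruct (Rlt_dec (u j x) (1 - q j)); [lra|].
      destruct (Rlt_dec (u j y) (1 - q j)); [lra|].
      assert (Hq: q j = / INR (j+2)) by reflexivity.
      replace ((u j y - (1 - q j)) / q j - (u j x - (1 - q j)) / q j)
        with ((u j y - u j x) * INR (j+2)) by (rewrite Hq; field; repeat split; lra).
      assert (0 <= y - x) by lra.
      split.
      * apply Rmult_lt_compat_l with (r := INR (j+2)) in IH1; [|lra].
        unfold Rdiv. rewrite Hq, Rinv_inv. nra.
      * apply Rmult_le_compat_r; [lra|].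
        assert (1 <= INR (j+1)) by (rewrite plus_INR; simpl; pose proof (pos_INR j); lra).
        assert ((y - x) * 1 <= (y - x) * INR (j+1)) by (apply Rmult_le_compat_l; lra).
        lra.
    + destruct (Rlt_dec (u j x) (1 - q j)); [|lra].
      destruct (Rlt_dec (u j y) (1 - q j)); [|lra].
      rewrite H1.
      assert (0 <= y - x) by lra.
      split.
      * unfold Rdiv. apply Rmult_lt_compat_r; auto.
        apply Rinv_0_lt_compat. apply Rmult_lt_0_compat; [lra|].
        apply Rinv_0_lt_compat; lra.
      * replace (u j y / (INR (j + 1) / INR (j + 2)) - u j x / (INR (j + 1) / INR (j + 2)))
          with ((u j y - u j x) * INR (j+2) / INR (j+1)) by (field; repeat split; lra).
        apply Rle_trans with ((y-x)*INR(j+1)*INR(j+2)/INR(j+1)); [right; field; lra|].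
        unfold Rdiv. apply Rmult_le_compat_r; [left; apply Rinv_0_lt_compat; lra|].
        apply Rmult_le_compat_r; lra.
Qed.

Lemma first_diff x y N : (exists i, (i < N)%nat /\ e i x <> e i y) ->
  exists j, (j < N)%nat /\ (forall i, (i < j)%nat -> e i x = e i y) /\ e j x <> e j y.
Proof.
  induction N as [|N IH]; intros [i [Hi Hne]]; [lia|].
  destruct (classic (exists i, (i < N)%nat /\ e i x <> e i y)) as [Hex|Hnex].
  - destruct (IH Hex) as [j [Hj1 Hj2]]. exists j. split; [lia|auto].
  - exists N. split; [lia|]. split.
    + intros i' Hi'. destruct (Req_dec (e i' x) (e i' y)); auto.
      exfalso; apply Hnex; eauto.
    + assert (i = N). { destruct (Nat.eq_dec i N); auto. exfalso; apply Hnex. exists i; split; [lia|auto]. }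
      subst; auto.
Qed.

Lemma gs_agree x y j : (forall i, (i < j)%nat -> e i x = e i y) ->
  gs y j - gs x j = (e j y - e j x) / M j.
Proof.
  intros H. destruct j as [|j].
  - unfold gs. simpl. field. pose proof (M_pos 0); lra.
  - unfold gs. simpl.
    rewrite (sum_eq (fun j0 : nat => e j0 x / M j0) (fun j0 : nat => e j0 y / M j0) j).
    + field. pose proof (M_pos (S j)); lra.
    + intros i Hi. rewrite (H i); [reflexivity|lia].
Qed.

Lemma g_strict x y : 0 <= x -> x < y -> y < 1 -> g x < g y.
Proof.
  intros H0 Hxy Hy1.
  assert (Hyx : 0 < y - x) by lra.
  destruct (archimed_cor1 (y - x) Hyx) as [N [HN1 HN2]].
  assert (HNp : 0 < INR N) by (apply lt_0_INR; auto).
  assert (HN' : 1 < (y - x) * INR N).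
  { apply (Rmult_lt_compat_r (INR N)) in HN1; auto. rewrite Rinv_l in HN1 by lra. lra. }
  assert (Hex : exists i, (i < N)%nat /\ e i x <> e i y).
  { destruct (classic (exists i, (i < N)%nat /\ e i x <> e i y)) as [?|Hn]; auto.
    exfalso. destruct (u_diff x y H0 Hxy Hy1 N) as [_ Hd].
    { intros i Hi. destruct (Req_dec (e i x) (e i y)); auto. exfalso; apply Hn; eauto. }
    pose proof (u_range N x (conj H0 (Rlt_trans _ _ _ Hxy Hy1))).
    pose proof (u_range N y (conj (Rlt_le _ _ (Rle_lt_trans _ _ _ H0 Hxy)) Hy1)).
    rewrite plus_INR in Hd. simpl in Hd. nra. }
  destruct (first_diff x y N Hex) as [j [_ [Hag Hne]]].
  destruct (u_diff x y H0 Hxy Hy1 j Hag) as [Hlt _].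
  assert (Hexj : e j x = 0 /\ e j y = 1).
  { unfold e in *. destruct (Rle_dec (1 - q j) (u j x));
    destruct (Rle_dec (1 - q j) (u j y)); try lra; split; lra. }
  destruct Hexj as [Hx0 Hy1'].
  pose proof (gs_agree x y j Hag) as Hgs. rewrite Hx0, Hy1' in Hgs.
  pose proof (g_ge y j). pose proof (g_le x j).
  pose proof (M_S_ge j). pose proof (M_pos j). pose proof (M_pos (S j)).
  assert (8/7 / M (S j) < (1 - 0) / M j).
  { unfold Rdiv. apply (Rmult_lt_reg_r (M (S j) * M j)). nra.
    replace (8 * / 7 * / M (S j) * (M (S j) * M j)) with (8/7 * M j) by (field; repeat split; lra).
    replace ((1 - 0) * / M j * (M (S j) * M j)) with (M (S j)) by (field; repeat split; lra). lra. }
  lra.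
Qed.

Definition MN (j:nat) : nat := (2 ^ ((j+1)*(j+1)))%nat.

Lemma MN_M j : INR (MN j) = M j.
Proof. unfold MN, M. rewrite pow_INR. reflexivity. Qed.

Lemma M_div j J : (j <= J)%nat -> exists d:nat, M J = M j * INR (2 ^ d).
Proof.
  intro H. exists ((J+1)*(J+1) - (j+1)*(j+1))%nat. unfold M. rewrite pow_INR.
  rewrite <- pow_add. f_equal. simpl.
  assert ((j+1)*(j+1) <= (J+1)*(J+1))%nat by nia. lia.
Qed.

Lemma gs_int x J j : (j <= J)%nat -> exists N:nat, M J * gs x j = INR N.
Proof.
  induction j as [|j IH]; intro H.
  - destruct (M_div 0 J) as [d Hd]; [lia|]. unfold gs. simpl.
    destruct (e_01 0 x) as [He|He]; rewrite He.
    + exists 0%nat. simpl. field. pose proof (M_pos 0); lra.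
    + exists (2^d)%nat. rewrite Hd. field. pose proof (M_pos 0); lra.
  - destruct IH as [N HN]; [lia|].
    destruct (M_div (S j) J) as [d Hd]; [lia|]. unfold gs in *. simpl.
    rewrite Rmult_plus_distr_l, HN.
    destruct (e_01 (S j) x) as [He|He]; rewrite He.
    + exists N. field. pose proof (M_pos (S j)); lra.
    + exists (N + 2^d)%nat. rewrite plus_INR, Hd. field. pose proof (M_pos (S j)); lra.
Qed.

Lemma nat_bound J : (2*(J+1)*(J+2) <= 7 * 4^J)%nat.
Proof.
  induction J as [|J IH]; simpl; [lia|].
  assert (2*(J+2)*(J+3) <= 4 * (2*(J+1)*(J+2)))%nat by nia. lia.
Qed.

Lemma good_cos_sin J a x : 0 <= x < 1 -> e (S J) x = 0 ->
  (a < (J+2) * 2^(2*J+3))%nat ->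
  1 - cos (2 * PI * INR (a * MN J) * g x) <= / INR (J+1) /\
  Rabs (sin (2 * PI * INR (a * MN J) * g x)) <= / INR (J+1).
Proof.
  intros Hx He Ha.
  destruct (gs_int x J J) as [N HN]; [lia|].
  set (s := INR a * M J * (g x - gs x J)).
  assert (Heq : 2 * PI * INR (a * MN J) * g x = 2 * PI * s + 2 * INR (a * N) * PI).
  { unfold s. rewrite !mult_INR, MN_M, <- HN. ring. }
  assert (Hgs : gs x (S J) = gs x J).
  { unfold gs. simpl. fold (gs x J). unfold gs. rewrite He. unfold Rdiv. ring. }
  pose proof (g_ge x J). pose proof (g_le x (S J)). rewrite Hgs in H0.
  pose proof (pos_INR a). pose proof (M_pos J). pose proof (M_pos (S J)). pose proof (M_pos (S (S J))).
  assert (Hs0 : 0 <= s) by (unfold s; apply Rmult_le_pos; [apply Rmult_le_pos|]; lra).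
  assert (HaR : INR a * M J <= INR (J+2) * M (S J)).
  { rewrite M_S. replace (INR (J + 2) * (M J * 2 ^ (2 * J + 3))) with (INR (J+2) * 2 ^ (2*J+3) * M J) by ring.
    apply Rmult_le_compat_r; [lra|]. replace (2:R) with (INR 2) by reflexivity.
    rewrite <- pow_INR, <- mult_INR. apply le_INR. lia. }
  assert (Hs1 : s <= INR (J+2) * M (S J) * (8/7 / M (S (S J)))).
  { unfold s. apply Rle_trans with (INR a * M J * (8/7 / M (S (S J)))).
    - apply Rmult_le_compat_l; [apply Rmult_le_pos; lra|]. lra.
    - apply Rmult_le_compat_r; [|lra]. unfold Rdiv. apply Rmult_le_pos; [lra|].
      left; apply Rinv_0_lt_compat; lra. }
  assert (HP : 2 ^ (2 * S J + 3) = 32 * 4 ^ J).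
  { replace (2 * S J + 3)%nat with (5 + 2 * J)%nat by lia. rewrite pow_add, pow_mult.
    replace (2^2) with 4 by ring. replace (2^5) with 32 by ring. ring. }
  assert (Hth' : 2 * PI * ((INR J + 2) * (8/7) / (32 * 4^J)) <= / (INR J + 1)).
  { pose proof (nat_bound J) as Hn. apply le_INR in Hn.
    rewrite !mult_INR, pow_INR, !plus_INR in Hn.
    replace (INR 4) with 4 in Hn by (simpl; ring).
    replace (INR 2) with 2 in Hn by (simpl; ring).
    replace (INR 7) with 7 in Hn by (simpl; ring).
    replace (INR 1) with 1 in Hn by (simpl; ring).
    set (j := INR J) in *. set (P := 4^J) in *.
    assert (Hj : 0 <= j) by (unfold j; apply pos_INR).
    assert (HPp : 0 < P) by (unfold P; apply pow_lt; lra).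
    pose proof PI_4. pose proof PI_RGT_0.
    assert (E1: 2 * PI * ((j + 2) * (8/7) / (32 * P)) = (PI*(16/7)*((j+1)*(j+2))) * / ((j+1)*(32*P))) by (field; lra).
    assert (E2: / (j+1) = (32*P) * / ((j+1)*(32*P))) by (field; lra).
    rewrite E1, E2. apply Rmult_le_compat_r. left; apply Rinv_0_lt_compat; nra.
    assert (0 <= (j+1)*(j+2)) by nra. nra. }
  assert (Hth : 2 * PI * (INR (J+2) * M (S J) * (8/7 / M (S (S J))))
                <= / INR (J+1)).
  { rewrite (M_S (S J)), HP.
    replace (INR (J+2)) with (INR J + 2) by (rewrite plus_INR; simpl; ring).
    replace (INR (J+1)) with (INR J + 1) by (rewrite plus_INR; simpl; ring).
    replace ((INR J + 2) * M (S J) * (8 / 7 / (M (S J) * (32 * 4 ^ J))))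
      with ((INR J + 2) * (8/7) / (32 * 4^J)).
    exact Hth'. field. split; [|lra]. apply pow_nonzero; lra. }
  assert (H2s : 2 * PI * s <= / INR (J+1)).
  { pose proof PI_RGT_0. apply Rle_trans with (2 := Hth). apply Rmult_le_compat_l; lra. }
  assert (0 <= 2 * PI * s) by (pose proof PI_RGT_0; apply Rmult_le_pos; lra).
  rewrite Heq, cos_period, sin_period. split.
  - pose proof (cos_lip 0 (2 * PI * s)) as Hc. rewrite cos_0 in Hc.
    replace (0 - 2 * PI * s) with (- (2 * PI * s)) in Hc by ring.
    rewrite Rabs_Ropp, (Rabs_pos_eq (2 * PI * s)) in Hc by lra.
    unfold Rabs in Hc. destruct Rcase_abs; lra.
  - pose proof (abs_sin_le (2 * PI * s)) as Hc. rewrite (Rabs_pos_eq (2*PI*s)) in Hc by lra. lra.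
Qed.

Definition RN (J:nat) : nat := (2 ^ (2*J+3))%nat.

Fixpoint st (k:nat) : nat * nat :=
  match k with
  | 0 => (0, 1)%nat
  | S k => let (J, a) := st k in
           if Nat.ltb (a+1) ((J+2) * RN J) then (J, a+1)%nat else (S J, J+2)%nat
  end.

Definition nk (k:nat) : nat := let (J, a) := st k in (a * MN J)%nat.

Lemma RN_pos J : (1 <= RN J)%nat.
Proof. unfold RN. assert (2^0 <= 2^(2*J+3))%nat by (apply Nat.pow_le_mono_r; lia). rewrite Nat.pow_0_r in H. lia. Qed.

Lemma MN_S J : MN (S J) = (RN J * MN J)%nat.
Proof. unfold MN, RN. rewrite <- Nat.pow_add_r. f_equal. lia. Qed.

Lemma MN_pos J : (1 <= MN J)%nat.
Proof. unfold MN. assert (2^0 <= 2^((J+1)*(J+1)))%nat by (apply Nat.pow_le_mono_r; lia). rewrite Nat.pow_0_r in H. lia. Qed.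

Lemma st_inv k : (fst (st k) + 1 <= snd (st k) < (fst (st k) + 2) * RN (fst (st k)))%nat.
Proof.
  induction k as [|k IH]; simpl.
  - unfold RN. simpl. lia.
  - destruct (st k) as [J a]. simpl in IH.
    destruct (Nat.ltb_spec (a+1) ((J+2)*RN J)); simpl.
    + lia.
    + pose proof (RN_pos (S J)). nia.
Qed.

Lemma nk_S k : nk (S k) = ((snd (st k) + 1) * MN (fst (st k)))%nat.
Proof.
  pose proof (st_inv k). unfold nk. simpl. destruct (st k) as [J a]. simpl in *.
  destruct (Nat.ltb_spec (a+1) ((J+2)*RN J)); simpl.
  - reflexivity.
  - rewrite MN_S. assert (a + 1 = (J+2) * RN J)%nat by lia. rewrite H1. ring.
Qed.

Lemma nk_eq k : nk k = (snd (st k) * MN (fst (st k)))%nat.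
Proof. unfold nk. destruct (st k); reflexivity. Qed.

Lemma nk_pos0 : (0 < nk 0)%nat.
Proof. unfold nk. simpl. pose proof (MN_pos 0). lia. Qed.

Lemma nk_incr k : (nk k < nk (S k))%nat.
Proof. rewrite nk_S, nk_eq. pose proof (MN_pos (fst (st k))). nia. Qed.

Lemma nk_ge k : (k <= nk k)%nat.
Proof. induction k as [|k IH]; [lia|]. pose proof (nk_incr k). lia. Qed.

Lemma level_grows J0 : exists K, forall k, (K <= k)%nat -> (J0 <= fst (st k))%nat.
Proof.
  exists ((J0+1) * MN J0)%nat. intros k Hk.
  destruct (Nat.le_gt_cases J0 (fst (st k))) as [H|H]; auto. exfalso.
  pose proof (nk_ge k). pose proof (st_inv k). rewrite nk_eq in H0.
  set (J := fst (st k)) in *. set (a := snd (st k)) in *.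
  assert (HM : (MN (S J) <= MN J0)%nat).
  { unfold MN. apply Nat.pow_le_mono_r; [lia|]. nia. }
  rewrite MN_S in HM.
  assert (a * MN J < (J+2) * RN J * MN J)%nat.
  { pose proof (MN_pos J). apply Nat.mul_lt_mono_pos_r; lia. }
  assert ((J+2) * RN J * MN J <= (J0+1) * MN J0)%nat.
  { rewrite <- Nat.mul_assoc. apply Nat.mul_le_mono; lia. }
  lia.
Qed.

Lemma ratio_eq k : INR (nk (S k)) / INR (nk k) = 1 + / INR (snd (st k)).
Proof.
  rewrite nk_S, nk_eq. pose proof (st_inv k). pose proof (MN_pos (fst (st k))).
  rewrite !mult_INR, plus_INR. simpl.
  assert (0 < INR (snd (st k))) by (apply lt_0_INR; lia).
  assert (0 < INR (MN (fst (st k)))) by (apply lt_0_INR; lia).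
  field. lra.
Qed.

Definition G (x : R) : R :=
  if Rlt_dec x 0 then 0 else if Rlt_dec x 1 then g x else 1.

Lemma G_nd x y : x <= y -> G x <= G y.
Proof.
  intro Hxy. unfold G.
  destruct (Rlt_dec x 0) as [Hx|Hx]; destruct (Rlt_dec y 0) as [Hy|Hy]; try lra;
  destruct (Rlt_dec x 1) as [Hx1|Hx1]; destruct (Rlt_dec y 1) as [Hy1|Hy1]; try lra;
  try (pose proof (g_range y); lra); try (pose proof (g_range x); lra).
  destruct (Rle_lt_or_eq_dec _ _ Hxy) as [H|H].
  - apply Rlt_le, g_strict; lra.
  - subst; lra.
Qed.

Lemma G_eq x : 0 <= x < 1 -> G x = g x.
Proof. intros [H1 H2]. unfold G. destruct (Rlt_dec x 0); [lra|]. destruct (Rlt_dec x 1); [auto|lra]. Qed.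

Lemma G_inj x y : 0 <= x < 1 -> 0 <= y < 1 -> G x = G y -> x = y.
Proof.
  intros Hx Hy. rewrite (G_eq x Hx), (G_eq y Hy). intro H.
  destruct (Rtotal_order x y) as [Hl|[Hl|Hl]]; auto.
  - pose proof (g_strict x y ltac:(lra) Hl ltac:(lra)). lra.
  - pose proof (g_strict y x ltac:(lra) Hl ltac:(lra)). lra.
Qed.

Definition D01 : R -> Prop := fun x => 0 <= x < 1.

Definition cq (j:nat) : R := 1 - q j.

Lemma S_step J a b x : 0 <= a -> a <= b -> b <= 1 -> D01 x ->
  ((a <= u (S J) x < b) <->
   ((cq J * a <= u J x < cq J * b) \/ (cq J + q J * a <= u J x < cq J + q J * b))).
Proof.
  intros Ha Hab Hb Hx. pose proof (q_bounds J). pose proof (u_range J x Hx).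
  unfold cq. cbn [u]. unfold T. set (v := u J x) in *. set (c := 1 - q J) in *.
  assert (Hc : 0 < c) by (unfold c; lra).
  destruct (Rlt_dec v c) as [Hv|Hv].
  - split.
    + intros [H1 H2]. left. split.
      * apply (Rmult_le_compat_l c) in H1; [|lra]. unfold Rdiv in H1.
        replace (c * (v * / c)) with v in H1 by (field; lra). lra.
      * apply (Rmult_lt_compat_l c) in H2; [|lra]. unfold Rdiv in H2.
        replace (c * (v * / c)) with v in H2 by (field; lra). lra.
    + intros [[H1 H2]|[H1 H2]].
      * split.
        -- apply (Rmult_le_reg_l c); [lra|]. unfold Rdiv. replace (c * (v * / c)) with v by (field; lra). lra.
        -- apply (Rmult_lt_reg_l c); [lra|]. unfold Rdiv. replace (c * (v * / c)) with v by (field; lra). lra.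
      * exfalso. assert (0 <= q J * a) by (apply Rmult_le_pos; lra). lra.
  - assert (Hq : 0 < q J) by lra.
    split.
    + intros [H1 H2]. right. split.
      * apply (Rmult_le_compat_l (q J)) in H1; [|lra]. unfold Rdiv in H1.
        replace (q J * ((v - c) * / q J)) with (v - c) in H1 by (field; lra). lra.
      * apply (Rmult_lt_compat_l (q J)) in H2; [|lra]. unfold Rdiv in H2.
        replace (q J * ((v - c) * / q J)) with (v - c) in H2 by (field; lra). lra.
    + intros [[H1 H2]|[H1 H2]].
      * exfalso. assert (c * b <= c * 1) by (apply Rmult_le_compat_l; lra). lra.
      * split.
        -- apply (Rmult_le_reg_l (q J)); [lra|]. unfold Rdiv. replace (q J * ((v - c) * / q J)) with (v - c) by (field; lra). lra.
        -- apply (Rmult_lt_reg_l (q J)); [lra|]. unfold Rdiv. replace (q J * ((v - c) * / q J)) with (v - c) by (field; lra). lra.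
Qed.

Lemma S_step_bounds J a b : 0 <= a -> a <= b -> b <= 1 ->
  0 <= cq J * a /\ cq J * a <= cq J * b /\ cq J * b <= 1 /\
  0 <= cq J + q J * a /\ cq J + q J * a <= cq J + q J * b /\ cq J + q J * b <= 1 /\
  cq J * b <= cq J + q J * a.
Proof.
  intros. pose proof (q_bounds J). unfold cq. repeat split; nra.
Qed.

Lemma S_step_disj J a b x : 0 <= a -> a <= b -> b <= 1 ->
  ~ ((cq J * a <= u J x < cq J * b) /\ (cq J + q J * a <= u J x < cq J + q J * b)).
Proof. intros. pose proof (S_step_bounds J a b H H0 H1). lra. Qed.

Definition SJ (J:nat) (a b : R) : R -> Prop := fun x => D01 x /\ (a <= u J x < b).

Definition Ico (a b : R) : R -> Prop := fun x => a <= x < b.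
Definition xj (m j : nat) : R := INR j / INR (S m).

Lemma xj_S m j : xj m (S j) = xj m j + / INR (S m).
Proof. unfold xj. rewrite S_INR. pose proof (pos_INR m). rewrite S_INR. field. lra. Qed.

Lemma xj_0 m : xj m 0 = 0.
Proof. unfold xj. simpl. unfold Rdiv. ring. Qed.

Lemma xj_last m : xj m (S m) = 1.
Proof. unfold xj. field. pose proof (pos_INR m). rewrite S_INR. lra. Qed.

Lemma xj_ge0 m j : 0 <= xj m j.
Proof. unfold xj. pose proof (pos_INR j). pose proof (lt_0_INR (S m) ltac:(lia)).
  unfold Rdiv. apply Rmult_le_pos; [lra|]. left; apply Rinv_0_lt_compat; lra. Qed.

Lemma inv_Sm_pos m : 0 < / INR (S m).
Proof. apply Rinv_0_lt_compat, lt_0_INR; lia. Qed.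

Lemma Ij_close m j x : Ico (xj m j) (xj m (S j)) x -> Rabs (x - xj m j) <= / INR (S m).
Proof. unfold Ico. rewrite xj_S. intros [H1 H2]. rewrite Rabs_pos_eq; lra. Qed.

Lemma lipschitz_cont (f : R -> R) (L : R) : 0 <= L ->
  (forall a b, Rabs (f a - f b) <= L * Rabs (a - b)) -> forall x, continuity_pt f x.
Proof.
  intros HL Hf x eps Heps. exists (eps / (L + 1)). split.
  - unfold Rdiv. apply Rmult_lt_0_compat; [lra|]. apply Rinv_0_lt_compat; lra.
  - intros y [_ Hy]. simpl in *. unfold R_dist in *.
    apply Rle_lt_trans with (L * Rabs (y - x)); [apply Hf|].
    apply Rle_lt_trans with (L * (eps / (L + 1))).
    + apply Rmult_le_compat_l; lra.
    + apply (Rmult_lt_reg_r (L + 1)); [lra|].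
      unfold Rdiv. replace (L * (eps * / (L + 1)) * (L + 1)) with (L * eps) by (field; lra).
      nra.
Qed.

Definition fc (n : nat) (t : R) : R := cos (2 * PI * INR n * t).
Definition fs (n : nat) (t : R) : R := sin (2 * PI * INR n * t).

Lemma cn_ge0 n : 0 <= 2 * PI * INR n.
Proof. pose proof PI_RGT_0. pose proof (pos_INR n). apply Rmult_le_pos; lra. Qed.

Lemma fc_lip n a b : Rabs (fc n a - fc n b) <= 2 * PI * INR n * Rabs (a - b).
Proof.
  unfold fc. eapply Rle_trans; [apply cos_lip|].
  rewrite <- Rmult_minus_distr_l, Rabs_mult, (Rabs_pos_eq _ (cn_ge0 n)). apply Rle_refl.
Qed.

Lemma fs_lip n a b : Rabs (fs n a - fs n b) <= 2 * PI * INR n * Rabs (a - b).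
Proof.
  unfold fs. eapply Rle_trans; [apply sin_lip|].
  rewrite <- Rmult_minus_distr_l, Rabs_mult, (Rabs_pos_eq _ (cn_ge0 n)). apply Rle_refl.
Qed.

Lemma fc_b n x : Rabs (fc n x) <= 1.
Proof. unfold fc. pose proof (COS_bound (2 * PI * INR n * x)). unfold Rabs. destruct Rcase_abs; lra. Qed.
Lemma fs_b n x : Rabs (fs n x) <= 1.
Proof. unfold fs. pose proof (SIN_bound (2 * PI * INR n * x)). unfold Rabs. destruct Rcase_abs; lra. Qed.

Definition h1 (n : nat) (t : R) : R := 1 - fc n t.
Definition h2 (n : nat) (t : R) : R := Rabs (fs n t).

Lemma h1_lip n a b : Rabs (h1 n a - h1 n b) <= 2 * PI * INR n * Rabs (a - b).
Proof. unfold h1. replace (1 - fc n a - (1 - fc n b)) with (- (fc n a - fc n b)) by ring.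
  rewrite Rabs_Ropp. apply fc_lip. Qed.
Lemma h2_lip n a b : Rabs (h2 n a - h2 n b) <= 2 * PI * INR n * Rabs (a - b).
Proof. unfold h2. eapply Rle_trans; [apply Rabs_triang_inv2|]. apply fs_lip. Qed.
Lemma h1_b n x : Rabs (h1 n x) <= 2.
Proof. unfold h1. pose proof (fc_b n x). unfold Rabs in *. repeat destruct Rcase_abs; lra. Qed.
Lemma h2_b n x : Rabs (h2 n x) <= 1.
Proof. unfold h2. rewrite Rabs_Rabsolu. apply fs_b. Qed.

Definition Bs (n : nat) (th : R) : R -> Prop := fun t => th < h1 n t \/ th < h2 n t.

Lemma good_notB k x : D01 x -> e (S (fst (st k))) x = 0 ->
  ~ Bs (nk k) (/ INR (fst (st k) + 1)) (G x).
Proof.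
  intros Hx He. pose proof (st_inv k) as Hi. rewrite nk_eq.
  rewrite (G_eq x Hx).
  destruct (good_cos_sin (fst (st k)) (snd (st k)) x Hx He) as [H1 H2].
  { unfold RN in Hi. lia. }
  unfold Bs, h1, h2, fc, fs. lra.
Qed.

Lemma e1_u J x : D01 x -> e J x <> 0 -> 1 - q J <= u J x < 1.
Proof.
  intros Hx He. pose proof (u_range J x Hx). unfold e in He.
  destruct (Rle_dec (1 - q J) (u J x)); [lra|]. exfalso; apply He; reflexivity.
Qed.

Module MC.
From HB Require Import structures.
From mathcomp Require Import all_boot all_order all_algebra.
From mathcomp Require Import all_classical all_reals all_analysis.
From mathcomp Require Import Rstruct Rstruct_topology measurable_realfun.
Import Order.TTheory GRing.Theory Num.Theory.
Import numFieldNormedType.Exports.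
Local Open Scope classical_set_scope.
Local Open Scope ring_scope.

Notation RT := (measurableTypeR R).
Lemma G_meas : measurable_fun (T:=RT) (U:=RT) setT G.
Proof.
  apply: nondecreasing_measurable => // x y /RleP H; apply/RleP; exact: G_nd.
Qed.

Lemma D01E : D01 = [set` `[0%R, 1%R[].
Proof.
  rewrite /D01; apply/seteqP; split => x /=.
  - by move=> [/RleP H1 /RltP H2]; rewrite in_itv /= H1 H2.
  - by rewrite in_itv /= => /andP [/RleP H1 /RltP H2].
Qed.

Lemma mD01 : measurable (D01 : set RT).
Proof. by rewrite D01E; exact: measurable_itv. Qed.

Definition mum (A : set RT) : \bar R := lebesgue_measure ((G @^-1` A `&` D01) : set RT).

Lemma mum0 : mum set0 = 0%E.
Proof. by rewrite /mum preimage_set0 set0I measure0. Qed.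

Lemma mum_ge0 A : (0 <= mum A)%E.
Proof. exact: measure_ge0. Qed.

Lemma mum_sigma : semi_sigma_additive mum.
Proof.
move=> F mF tF mUF; rewrite /mum preimage_bigcup setI_bigcupl.
apply: measure_semi_sigma_additive.
- by move=> n; apply: measurableI; [rewrite -[X in measurable X]setTI; exact: G_meas|exact: mD01].
- apply/trivIsetP => /= i j _ _ ij; rewrite setIACA -preimage_setI.
  by move/trivIsetP : tF => /(_ _ _ _ _ ij) ->//; rewrite preimage_set0 set0I.
- rewrite -setI_bigcupl; apply: measurableI; last exact: mD01.
  by rewrite -preimage_bigcup -[X in measurable X]setTI; exact: G_meas.
Qed.

HB.instance Definition _ := isMeasure.Build _ _ _ mum mum0 mum_ge0 mum_sigma.

Check (mum : {measure set RT -> \bar R}).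

Lemma itv_meas (a b : R) : (0 <= a)%coqR -> (a <= b)%coqR ->
  lebesgue_measure ([set` `[a, b[] : set RT) = ((b - a)%coqR)%:E.
Proof.
  move=> Ha Hab. rewrite lebesgue_measure_itv /= lte_fin.
  case: (Rle_lt_or_eq_dec _ _ Hab) => H.
  - by have ->: a < b by apply/RltP. 
  - subst. by rewrite ltxx Rminus_diag.
Qed.

Lemma SJ_prop J : forall a b, (0 <= a)%coqR -> (a <= b)%coqR -> (b <= 1)%coqR ->
  measurable (SJ J a b : set RT) /\ lebesgue_measure (SJ J a b : set RT) = ((b - a)%coqR)%:E.
Proof.
  elim: J => [|J IH] a b Ha Hab Hb.
  - have ->: SJ 0 a b = [set` `[a, b[].
    { rewrite /SJ /D01; apply/seteqP; split => x /=.
      - move=> [_ [/RleP H1 /RltP H2]]; by rewrite in_itv /= H1 H2.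
      - rewrite in_itv /= => /andP [/RleP H1 /RltP H2]. split; lra. }
    split; first exact: measurable_itv. exact: itv_meas.
  - have [B1 [B2 [B3 [B4 [B5 [B6 B7]]]]]] := S_step_bounds J a b Ha Hab Hb.
    have ->: SJ J.+1 a b = SJ J (cq J * a) (cq J * b) `|` SJ J (cq J + q J * a) (cq J + q J * b).
    { rewrite /SJ; apply/seteqP; split => x /=.
      - move=> [Hx H]. have [H' _] := S_step J a b x Ha Hab Hb Hx.
        by case: (H' H) => K; [left|right].
      - move=> [[Hx H]|[Hx H]]; split => //;
          apply: (proj2 (S_step J a b x Ha Hab Hb Hx)); [left|right]; done. }
    have [m1 e1] := IH _ _ B1 B2 B3.
    have [m2 e2] := IH _ _ B4 B5 B6.
    split; first exact: measurableU.
    rewrite measureU //; last first.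
    { apply/seteqP; split => x //= [[_ H1] [_ H2]].
      exfalso; exact: (S_step_disj J a b x Ha Hab Hb (conj H1 H2)). }
    apply: etrans; first exact: (congr2 (fun x y => (x + y)%E) e1 e2).
    rewrite /= -EFinD; congr EFin.
    have E : (cq J * b - cq J * a + (cq J + q J * b - (cq J + q J * a)) = b - a)%coqR
      by rewrite /cq; ring.
    exact: E.
Qed.

Lemma open_setE (A : R -> Prop) : open_set A -> open (A : set R).
Proof.
  move=> HA. rewrite openE => x Ax.
  have [[d dpos] Hd] := HA x Ax.
  apply/nbhs_ballP. exists d; first by apply/RltP.
  move=> y /= Hy. apply: Hd. rewrite /disc /=.
  move: Hy. rewrite /ball /= -RabsE -RminusE => /RltP. 
  by rewrite Rabs_minus_sym.
Qed.

Lemma borel_meas (A : R -> Prop) : Defs.borel A -> measurable (A : set RT).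
Proof.
  elim => {A}.
  - move=> A /open_setE. exact: open_measurable.
  - move=> A _ mA. exact: measurableC.
  - move=> A _ mA. have -> : (fun x => exists n, A n x) = \bigcup_n (A n : set RT).
    { apply/seteqP; split => x /=; [case=> n H; by exists n|case=> n _ H; by exists n]. }
    exact: bigcupT_measurable.
  - move=> A B _ mA HAB. have -> : B = A; last exact: mA.
    apply/funext => x; apply/propext; split => /HAB //.
Qed.

Lemma preG_meas (A : set RT) : measurable A -> measurable (G @^-1` A `&` D01 : set RT).
Proof.
  move=> mA; apply: measurableI; last exact: mD01.
  rewrite -[X in measurable X]setTI; exact: G_meas.
Qed.

Lemma lm_D01 : lebesgue_measure (D01 : set RT) = 1%E.
Proof. rewrite D01E itv_meas //; [|exact: Rle_refl|exact: Rle_0_1]. by rewrite Rminus_0_r. Qed.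

Lemma mum_le1 (A : set RT) : measurable A -> (mum A <= 1)%E.
Proof.
  move=> mA. rewrite /mum -lm_D01. apply: le_measure; rewrite ?inE.
  - exact: preG_meas.
  - exact: mD01.
  - by move=> x [].
Qed.

Lemma mum_fin (A : set RT) : measurable A -> mum A = (fine (mum A))%:E.
Proof.
  move=> mA. rewrite fineK // ge0_fin_numE ?measure_ge0 //.
  apply: le_lt_trans; [exact: (mum_le1 A mA)|exact: ltry].
Qed.

Lemma mum_D01 : mum D01 = 1%E.
Proof.
  rewrite /mum -lm_D01. congr lebesgue_measure.
  apply/seteqP; split => x /=; first by case.
  move=> Hx; split => //. rewrite /= G_eq //. exact: g_range.
Qed.

Lemma mum_notD01 : mum (fun x => ~ D01 x) = 0%E.
Proof.
  rewrite /mum. have -> : (G @^-1` (fun x => ~ D01 x) `&` D01 : set RT) = set0; last exact: measure0.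
  apply/seteqP; split => x //= [H Hx]. apply: H. rewrite G_eq //. exact: g_range.
Qed.

Lemma mum_set1 (y : R) : mum [set y] = 0%E.
Proof.
  rewrite /mum. set S := (G @^-1` [set y] `&` D01 : set RT).
  case: (pselect (exists z, S z)) => [[z Sz]|Hno].
  - apply: (subset_measure0 (preG_meas _ (measurable_set1 y)) (measurable_set1 z)).
    + move=> w Sw. rewrite /set1 /=. move: Sz Sw; rewrite /S /= => [[Gz Dz] [Gw Dw]].
      apply: (G_inj w z Dw Dz). by rewrite Gz Gw.
    + exact: lebesgue_measure_set1.
  - have -> : S = set0; last exact: measure0.
    apply/seteqP; split => x //= Sx. exfalso; apply: Hno; by exists x.
Qed.

Definition mu (A : R -> Prop) : R := fine (mum A).

Lemma mu_sigma (A : nat -> R -> Prop) : (forall n, Defs.borel (A n)) ->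
  (forall i j x, i <> j -> A i x -> A j x -> False) ->
  infinite_sum (fun n => mu (A n)) (mu (fun x => exists n, A n x)).
Proof.
  move=> bA dA.
  have mA n : measurable (A n : set RT) by exact: borel_meas.
  have tA : trivIset setT (A : nat -> set RT).
  { apply/trivIsetP => i j _ _ /eqP ij. apply/seteqP; split => x //= [H1 H2].
    exact: (dA i j x ij H1 H2). }
  have Ue : (fun x => exists n, A n x) = \bigcup_n (A n : set RT).
  { apply/seteqP; split => x /=; [case=> n H; by exists n|case=> n _ H; by exists n]. }
  have mU : measurable (\bigcup_n (A n : set RT)) by exact: bigcupT_measurable.
  have H := measure_semi_sigma_additive (s:=mum) (A : nat -> set RT) mA tA mU.
  have H2 : (fun n => \sum_(0 <= i < n) mu (A i)) @ \oo --> mu (fun x => exists n, A n x).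
  { rewrite Ue /mu. 
    have -> : (fun n => \sum_(0 <= i < n) fine (mum (A i))) = fine \o (fun n => \sum_(0 <= i < n) mum (A i)).
    { apply/funext => n /=. rewrite -EFin_sum_fine //= => i _. by rewrite (mum_fin _ (mA i)). }
    apply: fine_cvg. rewrite -mum_fin //. }
  move=> eps Heps.
  have Heps' : (0 < eps)%R by apply/RltP.
  have := iffLR (@cvgrPdist_lt _ R^o _ _ _ _ _) H2 eps Heps'.
  case=> N _ HN. exists N => n Hn.
  rewrite /R_dist RabsE sum_f_R0E distrC.
  apply/RltP. apply: HN. rewrite /=. apply/ssrnat.leP. lia.
Qed.

Lemma IcoE (a b : R) : Ico a b = [set` `[a, b[].
Proof.
  rewrite /Ico; apply/seteqP; split => x /=.
  - by move=> [/RleP H1 /RltP H2]; rewrite in_itv /= H1 H2.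
  - by rewrite in_itv /= => /andP [/RleP H1 /RltP H2].
Qed.

Lemma Ico_meas a b : measurable (Ico a b : set RT).
Proof. rewrite IcoE; exact: measurable_itv. Qed.

Lemma mum_lty (A : set RT) : measurable A -> (mum A < +oo)%E.
Proof. move=> mA; apply: le_lt_trans; [exact: (mum_le1 A mA)|exact: ltry]. Qed.

Lemma integ (f : R -> R) (c : R) (D : set RT) : measurable D ->
  (forall x, continuity_pt f x) -> (forall x, (Rabs (f x) <= c)%coqR) ->
  mum.-integrable D (EFin \o f).
Proof.
  move=> mD cf bf. apply: measurable_bounded_integrable => //.
  - exact: mum_lty.
  - have cf' : continuous f by move=> x; apply/continuity_ptE.
    have := continuous_measurable_fun cf'. move=> H. 
    apply: (measurable_funS measurableT (subsetT D)). exact: H.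
  - exists c; split; first by rewrite num_real.
    move=> M cM x _ /=. apply: le_trans (ltW cM). rewrite -RabsE. apply/RleP. exact: bf.
Qed.

Lemma cont_const (c : R) : forall x, continuity_pt (fun _ : R => c) x.
Proof. move=> x; exact: continuity_pt_const. Qed.

Lemma Rint_cst (D : set RT) (c : R) : measurable D ->
  \int[mum]_(x in D) c = (c * mu D)%coqR.
Proof. move=> mD. by rewrite Rintegral_cst. Qed.

Section Lip.
Variables (f : R -> R) (L : R).
Hypothesis HL : (0 <= L)%coqR.
Hypothesis Hlip : forall a b, (Rabs (f a - f b) <= L * Rabs (a - b))%coqR.
Hypothesis Hb : forall x, (Rabs (f x) <= 1)%coqR.

Lemma fcont : forall x, continuity_pt f x.
Proof. exact: (lipschitz_cont f L HL Hlip). Qed.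

Lemma piece (a b : R) (d : R) : (forall x, Ico a b x -> Rabs (x - a) <= d)%coqR ->
  (Rabs (\int[mum]_(x in Ico a b) f x - f a * mu (Ico a b)) <= L * d * mu (Ico a b))%coqR.
Proof.
  move=> Hd.
  have mI := Ico_meas a b.
  have iF : mum.-integrable (Ico a b) (EFin \o f) by apply: (integ f 1); [exact: mI|exact: fcont|exact: Hb].
  have iC : mum.-integrable (Ico a b) (EFin \o (fun _ => f a)).
  { apply: (integ _ (Rabs (f a))); [exact: mI|exact: cont_const|move=> x; exact: Rle_refl]. }
  have cD : forall x, continuity_pt (fun x => f x - f a)%coqR x.
  { move=> x; apply: continuity_pt_minus; [exact: fcont|exact: cont_const]. }
  have iD : mum.-integrable (Ico a b) (EFin \o (fun x => f x - f a)).
  { apply: (integ _ 2) => // x. apply: Rle_trans; first exact: Rabs_triang.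
    rewrite Rabs_Ropp. have := Hb x; have := Hb a. lra. }
  have iA : mum.-integrable (Ico a b) (EFin \o (fun x => `|f x - f a|)).
  { apply: (integ _ 2) => //.
    - move=> x. have -> : (fun x => `|f x - f a|) = (fun x => Rabs (f x - f a)).
      { apply/funext => y. by rewrite RabsE. }
      apply: continuity_pt_comp; [exact: cD|exact: Rcontinuity_abs].
    - move=> x. rewrite -RabsE Rabs_Rabsolu. apply: Rle_trans; first exact: Rabs_triang.
      rewrite Rabs_Ropp. have := Hb x; have := Hb a. lra. }
  have iK : mum.-integrable (Ico a b) (EFin \o (fun _ => L * d)).
  { apply: (integ _ (Rabs (L * d))); [exact: mI|exact: cont_const|move=> x; exact: Rle_refl]. }
  rewrite -(Rint_cst (Ico a b) (f a) mI) RminusE -(RintegralB mI iF iC).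
  apply: Rle_trans; first (rewrite RabsE; apply/RleP; exact: (le_normr_Rintegral mI iD)).
  rewrite -(Rint_cst (Ico a b) (L * d) mI). apply/RleP. apply: (le_Rintegral mI iA iK).
  move=> x Ix. rewrite -RabsE. apply/RleP.
  apply: Rle_trans; first exact: Hlip.
  apply: Rmult_le_compat_l => //. exact: Hd.
Qed.

Lemma Ico_split (a b c : R) : (a <= b)%coqR -> (b <= c)%coqR ->
  Ico a c = Ico a b `|` Ico b c.
Proof.
  move=> Hab Hbc. rewrite /Ico; apply/seteqP; split => x /=.
  - move=> [H1 H2]. case: (Rlt_le_dec x b) => H; [left|right]; split; lra.
  - case=> [[H1 H2]|[H1 H2]]; split; lra.
Qed.

Lemma Ico_disj (a b c : R) : Ico a b `&` Ico b c = set0.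
Proof. rewrite /Ico; apply/seteqP; split => x //= [[H1 H2] [H3 H4]]. lra. Qed.

Lemma mu_fin_Ico a b : mum (Ico a b) = (mu (Ico a b))%:E.
Proof. rewrite /mu -mum_fin //. exact: Ico_meas. Qed.

Lemma mu_union (a b c : R) : (a <= b)%coqR -> (b <= c)%coqR ->
  mu (Ico a c) = (mu (Ico a b) + mu (Ico b c))%coqR.
Proof.
  move=> Hab Hbc. rewrite {1}/mu (Ico_split a b c Hab Hbc) measureU; [|exact: Ico_meas|exact: Ico_meas|exact: Ico_disj].
  apply: etrans; first exact: (congr1 fine (congr2 (fun x y => (x+y)%E) (mu_fin_Ico a b) (mu_fin_Ico b c))).
  by [].
Qed.

Lemma Rint_union (a b c : R) : (a <= b)%coqR -> (b <= c)%coqR ->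
  \int[mum]_(x in Ico a c) f x = (\int[mum]_(x in Ico a b) f x + \int[mum]_(x in Ico b c) f x)%coqR.
Proof.
  move=> Hab Hbc. rewrite (Ico_split a b c Hab Hbc) Rintegral_setU //; [exact: Ico_meas|exact: Ico_meas| |].
  - rewrite -(Ico_split a b c Hab Hbc). apply: (integ f 1); [exact: Ico_meas|exact: fcont|exact: Hb].
  - by rewrite /disj_set Ico_disj.
Qed.

Lemma induct m k : (Rabs (sum_f_R0 (fun j => f (xj m j) * mu (Ico (xj m j) (xj m (S j)))) k
   - \int[mum]_(x in Ico 0 (xj m (S k))) f x) <= L * / INR (S m) * mu (Ico 0 (xj m (S k))))%coqR.
Proof.
  have Hcl j : forall x, Ico (xj m j) (xj m (S j)) x -> (Rabs (x - xj m j) <= / INR (S m))%coqR.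
  { move=> x; exact: Ij_close. }
  elim: k => [|k IH].
  - rewrite /= -(xj_0 m). rewrite Rabs_minus_sym. exact: (piece _ _ _ (Hcl 0%N)).
  - have h0 := xj_ge0 m (S k). have h1 : (xj m (S k) <= xj m (S (S k)))%coqR.
    { rewrite (xj_S m (S k)). have := inv_Sm_pos m. lra. }
    rewrite /= (Rint_union _ _ _ h0 h1) (mu_union _ _ _ h0 h1).
    have P := piece _ _ _ (Hcl (S k)).
    rewrite Rabs_minus_sym in P.
    set A := sum_f_R0 _ k in IH *.
    set B := \int[mum]_(x in Ico 0 (xj m (S k))) f x in IH *.
    set C := \int[mum]_(x in Ico (xj m (S k)) (xj m (S (S k)))) f x in P *.
    set t := (f (xj m (S k)) * mu (Ico (xj m (S k)) (xj m (S (S k)))))%coqR in P *.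
    replace (A + t - (B + C))%coqR with ((A - B) + (t - C))%coqR by ring.
    apply: Rle_trans; first exact: Rabs_triang.
    rewrite Rmult_plus_distr_l. exact: Rplus_le_compat.
Qed.

Lemma mu_D01 : mu D01 = 1%coqR.
Proof. by rewrite /mu mum_D01. Qed.

Lemma approx_bound m : (Rabs (approx_sum mu f m - \int[mum]_(x in D01) f x) <= L * / INR (S m))%coqR.
Proof.
  have H := induct m m. rewrite xj_last in H.
  change (Ico 0 1) with D01 in H. rewrite mu_D01 Rmult_1_r in H. exact: H.
Qed.

Lemma approx_cv : Un_cv (approx_sum mu f) (\int[mum]_(x in D01) f x).
Proof.
  move=> eps Heps.
  have Hp : (0 < eps / (L + 1))%coqR.
  { apply: Rmult_lt_0_compat => //. apply: Rinv_0_lt_compat. lra. }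
  have [N [HN1 HN2]] := archimed_cor1 _ Hp.
  exists N => n Hn. rewrite /R_dist.
  apply: Rle_lt_trans; first exact: approx_bound.
  have HNpos : (0 < INR N)%coqR by apply: lt_0_INR.
  have HSn : (INR N <= INR (S n))%coqR by apply: le_INR; lia.
  have : (/ INR (S n) <= / INR N)%coqR by apply: Rinv_le_contravar.
  move=> Hi.
  apply: (Rle_lt_trans _ (L * (eps / (L + 1)))).
  - apply: Rmult_le_compat_l => //. apply: Rle_trans; first exact: Hi. lra.
  - apply: (Rmult_lt_reg_r (L + 1)); first lra.
    have -> : (L * (eps / (L + 1)) * (L + 1) = L * eps)%coqR by field; lra.
    nra.
Qed.
End Lip.

Lemma meas_gt (h : R -> R) (th : R) : (forall x, continuity_pt h x) ->
  measurable ((fun t => (th < h t)%coqR) : set RT).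
Proof.
  move=> ch. have ch' : continuous h by move=> x; apply/continuity_ptE.
  have mh := continuous_measurable_fun ch'.
  have := mh measurableT `]th, +oo[%classic (measurable_itv _).
  rewrite setTI. have -> : (h @^-1` `]th, +oo[%classic) = (fun t => (th < h t)%coqR); last by [].
  apply/seteqP; split => x /=; rewrite in_itv /= andbT; by move/RltP.
Qed.

Lemma mu_mono (A B : set RT) : measurable A -> measurable B -> A `<=` B -> (mu A <= mu B)%coqR.
Proof.
  move=> mA mB AB. apply/RleP. rewrite /mu. apply: fine_le.
  - by rewrite (mum_fin _ mA).
  - by rewrite (mum_fin _ mB).
  - apply: le_measure; rewrite ?inE //.
Qed.

Lemma mu_ge0 A : (0 <= mu A)%coqR.
Proof. apply/RleP. rewrite /mu. apply: fine_ge0. exact: measure_ge0. Qed.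

Lemma mu_le1 (A : set RT) : measurable A -> (mu A <= 1)%coqR.
Proof.
  move=> mA. apply/RleP. rewrite /mu. have := mum_le1 A mA. rewrite (mum_fin _ mA) lee_fin. by [].
Qed.

Lemma split_bound (h : R -> R) (c th : R) (B : set RT) : measurable B ->
  (forall x, continuity_pt h x) -> (forall x, (Rabs (h x) <= c)%coqR) ->
  (forall x, D01 x -> ~ B x -> (Rabs (h x) <= th)%coqR) -> (0 <= th)%coqR -> (0 <= c)%coqR ->
  (Rabs (\int[mum]_(x in D01) h x) <= c * mu B + th)%coqR.
Proof.
  move=> mB ch bh gh th0 c0.
  have m1 : measurable (D01 `&` B : set RT) by apply: measurableI; [exact: mD01|].
  have m2 : measurable (D01 `&` ~` B : set RT) by apply: measurableI; [exact: mD01|exact: measurableC].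
  have -> : (D01 : set RT) = (D01 `&` B) `|` (D01 `&` ~` B) by rewrite -setIUr setUv setIT.
  have iU : mum.-integrable ((D01 `&` B) `|` (D01 `&` ~` B)) (EFin \o h).
  { apply: (integ h c) => //. exact: measurableU. }
  rewrite Rintegral_setU //; last first.
  { rewrite /disj_set -setIIr setICr setI0. by []. }
  have iA : forall D : set RT, measurable D -> mum.-integrable D (EFin \o (fun x => `|h x|)).
  { move=> D mD. apply: (integ _ c) => //.
    - move=> x. have -> : (fun x => `|h x|) = (fun x => Rabs (h x)).
      { apply/funext => y. by rewrite RabsE. }
      apply: continuity_pt_comp; [exact: ch|exact: Rcontinuity_abs].
    - move=> x. rewrite -RabsE Rabs_Rabsolu. exact: bh. }
  have ic : forall D : set RT, forall k : R, measurable D -> mum.-integrable D (EFin \o (fun _ => k)).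
  { move=> D k mD. apply: (integ _ (Rabs k)) => //; [exact: cont_const|move=> x; exact: Rle_refl]. }
  have ih : forall D : set RT, measurable D -> mum.-integrable D (EFin \o h).
  { move=> D mD. exact: (integ h c). }
  apply: Rle_trans; first exact: Rabs_triang.
  apply: Rplus_le_compat.
  - apply: Rle_trans; first (rewrite RabsE; apply/RleP; exact: (le_normr_Rintegral m1 (ih _ m1))).
    apply: Rle_trans.
    + apply/RleP. apply: (le_Rintegral m1 (iA _ m1) (ic _ c m1)).
      move=> x _. rewrite -RabsE. apply/RleP. exact: bh.
    + rewrite Rint_cst //. apply: Rmult_le_compat_l => //.
      apply: (mu_mono (D01 `&` B) B m1 mB). by move=> x [].
  - apply: Rle_trans; first (rewrite RabsE; apply/RleP; exact: (le_normr_Rintegral m2 (ih _ m2))).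
    apply: Rle_trans.
    + apply/RleP. apply: (le_Rintegral m2 (iA _ m2) (ic _ th m2)).
      move=> x [Dx nB]. rewrite -RabsE. apply/RleP. exact: gh.
    + rewrite Rint_cst //. have := mu_le1 _ m2. have := mu_ge0 (D01 `&` ~` B). nra.
Qed.

Definition re (k : nat) : R := \int[mum]_(x in D01) fc (nk k) x.
Definition im (k : nat) : R := \int[mum]_(x in D01) fs (nk k) x.

Lemma fourier k : fourier_coeff mu (nk k) (re k) (im k).
Proof.
  split.
  - exact: (approx_cv (fc (nk k)) _ (cn_ge0 _) (fc_lip _) (fc_b _)).
  - exact: (approx_cv (fs (nk k)) _ (cn_ge0 _) (fs_lip _) (fs_b _)).
Qed.

Lemma Bs_meas n th : measurable (Bs n th : set RT).
Proof.
  have -> : (Bs n th : set RT) = (fun t => (th < h1 n t)%coqR) `|` (fun t => (th < h2 n t)%coqR) by [].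
  apply: measurableU; apply: meas_gt; apply: (lipschitz_cont _ _ (cn_ge0 n)).
  - exact: h1_lip.
  - exact: h2_lip.
Qed.

Lemma mu_Bs k : (mu (Bs (nk k) (/ INR (fst (st k) + 1))) <= q (S (fst (st k))))%coqR.
Proof.
  set J := fst (st k). set B := Bs (nk k) (/ INR (J + 1)).
  have hq := q_bounds (S J).
  have [mS eS] := SJ_prop (S J) (1 - q (S J)) 1 ltac:(lra) ltac:(lra) ltac:(lra).
  apply/RleP. rewrite /mu.
  have mB := Bs_meas (nk k) (/ INR (J + 1)).
  have -> : q (S J) = fine (((1 - (1 - q (S J)))%coqR)%:E) by simpl; ring.
  apply: fine_le.
  - by rewrite (mum_fin _ mB).
  - by [].
  - rewrite -eS /mum. apply: le_measure; rewrite ?inE //.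
    + exact: preG_meas.
    + move=> x [GB Dx]. split => //.
      case: (e_01 (S J) x) => He.
      * exfalso. exact: (good_notB k x Dx He GB).
      * apply: e1_u => //. rewrite He. lra.
Qed.

Lemma theta_ge0 J : (0 <= / INR (J + 1))%coqR.
Proof. left. apply: Rinv_0_lt_compat. apply: lt_0_INR. rewrite addn1. exact: Nat.lt_0_succ. Qed.

Lemma re_bound k : (Rabs (1 - re k) <= 2 * q (S (fst (st k))) + / INR (fst (st k) + 1))%coqR.
Proof.
  set J := fst (st k). set n := nk k.
  have mB := Bs_meas n (/ INR (J + 1)).
  have H := split_bound (h1 n) 2%coqR (/ INR (J + 1)) _ mB
    (lipschitz_cont _ _ (cn_ge0 n) (h1_lip n)) (h1_b n).
  have E : \int[mum]_(x in D01) h1 n x = (1 - re k)%coqR.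
  { rewrite /h1 /re. 
    have i1 : mum.-integrable D01 (EFin \o (fun _ : R => 1%coqR)).
    { apply: (integ _ 1%coqR); [exact: mD01|exact: cont_const|move=> x; rewrite Rabs_R1; exact: Rle_refl]. }
    have i2 : mum.-integrable D01 (EFin \o fc n).
    { apply: (integ _ 1%coqR); [exact: mD01| |exact: fc_b].
      exact: (lipschitz_cont _ _ (cn_ge0 n) (fc_lip n)). }
    have := RintegralB mD01 i1 i2. rewrite Rint_cst; last exact: mD01.
    rewrite mu_D01 Rmult_1_r. move=> HH. exact: HH. }
  rewrite -E. apply: Rle_trans; first apply: H.
  - move=> x Dx nB. rewrite Rabs_pos_eq.
    + apply: Rnot_lt_le => Hl. apply: nB. by left.
    + rewrite /h1 /fc. have := COS_bound (2 * PI * INR n * x). lra.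
  - exact: theta_ge0.
  - lra.
  - apply: Rplus_le_compat_r. apply: Rmult_le_compat_l; [lra|]. exact: mu_Bs.
Qed.

Lemma im_bound k : (Rabs (im k) <= q (S (fst (st k))) + / INR (fst (st k) + 1))%coqR.
Proof.
  set J := fst (st k). set n := nk k.
  have mB := Bs_meas n (/ INR (J + 1)).
  have H := split_bound (fs n) 1%coqR (/ INR (J + 1)) _ mB
    (lipschitz_cont _ _ (cn_ge0 n) (fs_lip n)) (fs_b n).
  apply: Rle_trans; first apply: H.
  - move=> x Dx nB. apply: Rnot_lt_le => Hl. apply: nB. by right.
  - exact: theta_ge0.
  - lra.
  - apply: Rplus_le_compat_r. rewrite Rmult_1_l. exact: mu_Bs.
Qed.

Lemma mu_borel : Defs.borel_prob_T mu.
Proof.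
  split.
  - move=> A B HAB. have -> : A = B; last by [].
    apply/funext => x; apply/propext; exact: HAB.
  - move=> A _. exact: mu_ge0.
  - exact: mu_sigma.
  - exact: mu_D01.
  - rewrite /mu. have -> : (fun x => ~ (0 <= x < 1)%coqR) = (fun x => ~ D01 x) by [].
    by rewrite mum_notD01.
Qed.

Lemma mu_atomless : Defs.atomless mu.
Proof. move=> x. rewrite /mu. have -> : (fun y => y = x) = [set x] by []. by rewrite mum_set1. Qed.

End MC.

Lemma inv_mono J J0 : (0 < J0)%nat -> (J0 <= J)%nat -> / INR (J + 1) <= / INR J0.
Proof.
  intros H1 H2. apply Rinv_le_contravar. apply lt_0_INR; lia. apply le_INR; lia.
Qed.

Lemma q_le J : q (S J) <= / INR (J + 1).
Proof.
  unfold q. apply Rinv_le_contravar. apply lt_0_INR; lia. apply le_INR; lia.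
Qed.

Lemma eventually_small (f : nat -> R) (C : R) : 0 < C ->
  (forall k, Rabs (f k) <= C * / INR (fst (st k) + 1)) -> Un_cv f 0.
Proof.
  intros HC Hf eps Heps.
  destruct (archimed_cor1 (eps / C)) as [J0 [HJ0 HJ0pos]].
  { unfold Rdiv. apply Rmult_lt_0_compat; [lra|]. apply Rinv_0_lt_compat; lra. }
  destruct (level_grows J0) as [K HK]. exists K. intros k Hk. unfold R_dist.
  rewrite Rminus_0_r. eapply Rle_lt_trans; [apply Hf|].
  pose proof (inv_mono (fst (st k)) J0 HJ0pos (HK k Hk)).
  apply Rle_lt_trans with (C * / INR J0).
  - apply Rmult_le_compat_l; lra.
  - apply (Rmult_lt_compat_l C) in HJ0; [|lra].
    replace (C * (eps / C)) with eps in HJ0 by (field; lra). lra.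
Qed.

Theorem mainTheorem16 :
  exists nk : nat -> nat,
    (0 < nk 0)%nat /\
    (forall k, (nk k < nk (S k))%nat) /\
    Un_cv (fun k => INR (nk (S k)) / INR (nk k)) 1 /\
    exists mu : (R -> Prop) -> R,
      borel_prob_T mu /\ atomless mu /\
      exists re im : nat -> R,
        (forall k, fourier_coeff mu (nk k) (re k) (im k)) /\
        Un_cv re 1 /\ Un_cv im 0.
Proof.
  exists nk. split; [apply nk_pos0|]. split; [apply nk_incr|]. split.
  - intros eps Heps.
    assert (H := eventually_small (fun k => INR (nk (S k)) / INR (nk k) - 1) 1 ltac:(lra)).
    destruct H with (eps := eps) as [N HN]; auto.
    + intros k. rewrite ratio_eq. replace (1 + / INR (snd (st k)) - 1) with (/ INR (snd (st k))) by ring.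
      pose proof (st_inv k).
      rewrite Rabs_pos_eq. rewrite Rmult_1_l. apply Rinv_le_contravar.
      apply lt_0_INR; lia. apply le_INR; lia.
      left. apply Rinv_0_lt_compat. apply lt_0_INR; lia.
    + exists N. intros n Hn. specialize (HN n Hn). unfold R_dist in *. rewrite Rminus_0_r in HN. auto.
  - exists MC.mu. split; [apply MC.mu_borel|]. split; [apply MC.mu_atomless|].
    exists MC.re, MC.im. split; [apply MC.fourier|]. split.
    + intros eps Heps.
      assert (H := eventually_small (fun k => MC.re k - 1) 3 ltac:(lra)).
      destruct H with (eps := eps) as [N HN]; auto.
      * intros k. assert (Rabs (1 - MC.re k) <= 2 * q (S (fst (st k))) + / INR (fst (st k) + 1)) by apply MC.re_bound. pose proof (q_le (fst (st k))).
        rewrite Rabs_minus_sym. lra.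
      * exists N. intros n Hn. specialize (HN n Hn). unfold R_dist in *. rewrite Rminus_0_r in HN. auto.
    + apply (eventually_small MC.im 2); [lra|].
      intros k. assert (Rabs (MC.im k) <= q (S (fst (st k))) + / INR (fst (st k) + 1)) by apply MC.im_bound. pose proof (q_le (fst (st k))). lra.
Qed.
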